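(* Let $G^1$ and $G^2$ be orable graphs. Then their Cartesian product $G^1\times G^2$ is orable.
   Context: A graph is a tuple $\langle V,s_1,s_2,\mathsf{null},\mathsf{root}\rangle$ with $V$ finite, $\mathsf{root}\neq\mathsf{null}$ in $V$, $s_1,s_2\subseteq V\times V$, and $\langle\mathsf{null},x\rangle\in s_i$ iff $x=\mathsf{null}$. A graph is orable if for all nodes $x$: $\langle\mathsf{root},x\rangle\in s_2$ iff $x=\mathsf{null}$. For $G^j=\langle V^j,s^j_1,s^j_2,\mathsf{null}^j,\mathsf{root}^j\rangle$ ($j=1,2$), the Cartesian product $G^1\times G^2=\langle V^0,s^0_1,s^0_2,\mathsf{null}^0,\mathsf{root}^0\rangle$ has $\mathsf{null}^0=\langle\mathsf{null}^1,\mathsf{null}^2\rangle$, $\mathsf{root}^0=\langle\mathsf{root}^1,\mathsf{root}^2\rangle$, $V^0=\{\mathsf{null}^0,\mathsf{root}^0\}\cup(V^1\setminus\{\mathsf{null}^1,\mathsf{root}^1\})\times(V^2\setminus\{\mathsf{null}^2,\mathsf{root}^2\})$, and $s^0_i$ is the set of pairs $\langle\langle x^1,x^2\rangle,\langle y^1,y^2\rangle\rangle$ of elements of $V^0$ with $\langle x^1,y^1\rangle\in s^1_i$ and $\langle x^2,y^2\rangle\in s^2_i$. *)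

(* Defs.v *)
From mathcomp Require Import all_boot.
Set Implicit Arguments. Unset Strict Implicit. Unset Printing Implicit Defensive.

Record pregraph := PreGraph {
  gV : finType;
  gs1 : rel gV;
  gs2 : rel gV;
  gnull : gV;
  groot : gV }.

Definition is_graph (G : pregraph) : Prop :=
  groot G <> gnull G /\
  (forall x, gs1 (gnull G) x <-> x = gnull G) /\
  (forall x, gs2 (gnull G) x <-> x = gnull G).

Definition orable (G : pregraph) : Prop :=
  forall x, gs2 (groot G) x <-> x = gnull G.

Section Product.
Variables G1 G2 : pregraph.

Definition prodP : pred (gV G1 * gV G2) := fun p =>
  [|| p == (gnull G1, gnull G2), p == (groot G1, groot G2) |
      (p.1 \notin [:: gnull G1; groot G1]) && (p.2 \notin [:: gnull G2; groot G2])].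

Definition prodV : finType := {p : gV G1 * gV G2 | prodP p}.

Lemma prod_null_subproof : prodP (gnull G1, gnull G2).
Proof. by rewrite /prodP eqxx. Qed.
Lemma prod_root_subproof : prodP (groot G1, groot G2).
Proof. by rewrite /prodP eqxx orbT. Qed.

Definition prod_null : prodV := exist (fun p => prodP p) _ prod_null_subproof.
Definition prod_root : prodV := exist (fun p => prodP p) _ prod_root_subproof.

Definition prod_s1 : rel prodV := fun x y =>
  gs1 (val x).1 (val y).1 && gs1 (val x).2 (val y).2.
Definition prod_s2 : rel prodV := fun x y =>
  gs2 (val x).1 (val y).1 && gs2 (val x).2 (val y).2.

Definition graph_prod : pregraph :=
  @PreGraph prodV prod_s1 prod_s2 prod_null prod_root.
End Product.

(* Main.v *)
Require Import Defs.
From mathcomp Require Import all_boot.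

Lemma prod_eq_null (G1 G2 : pregraph) (x : prodV G1 G2) :
  (val x).1 = gnull G1 /\ (val x).2 = gnull G2 <-> x = prod_null G1 G2.
Proof.
split.
- case: x => [[a b] ?] /= [h1 h2]; apply: val_inj => /=; by rewrite h1 h2.
- by move=> ->.
Qed.

Lemma prod_rel (G1 G2 : pregraph) (r1 : rel (gV G1)) (r2 : rel (gV G2)) a b :
  (forall x, r1 a x <-> x = gnull G1) -> (forall x, r2 b x <-> x = gnull G2) ->
  forall x : prodV G1 G2,
  r1 a (val x).1 && r2 b (val x).2 <-> x = prod_null G1 G2.
Proof.
move=> H1 H2 x; split.
- case/andP=> h1 h2; apply/prod_eq_null; split; [exact/H1 | exact/H2].
- move/prod_eq_null=> [h1 h2]; apply/andP; split; [exact/H1 | exact/H2].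
Qed.

Theorem proposition31 (G1 G2 : pregraph) :
  is_graph G1 -> orable G1 -> is_graph G2 -> orable G2 ->
  is_graph (graph_prod G1 G2) /\ orable (graph_prod G1 G2).
Proof.
move=> [rn1 [a1 b1]] o1 [rn2 [a2 b2]] o2.
split; [split; [|split] |].
- move=> /(congr1 val) /= [] h _; exact: rn1 h.
- move=> x; exact: (@prod_rel G1 G2 _ _ _ _ a1 a2 x).
- move=> x; exact: (@prod_rel G1 G2 _ _ _ _ b1 b2 x).
- move=> x; exact: (@prod_rel G1 G2 _ _ _ _ o1 o2 x).
Qed.
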